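(* Suppose $n\ge3$. For $\ell\ge0$ and $a=(a_1,\dots,a_\ell)\in\{1,\dots,n\}^\ell$, let $$|a_1a_2\cdots a_\ell\rangle=\sum_{k\ge0}\frac{(-1)^k}{k!}\,f_k\!\left(-\ell-\tfrac n2\right)F^k\Big[(\operatorname{ad}E)^k(x^{a_1}x^{a_2}\cdots x^{a_\ell})\Big](1)\in\mathbb{C}[x^1,\dots,x^n],$$ where a differential operator applied to $1$ means its action on the constant polynomial $1$, and $F^k$ acts by multiplication. Then $$|a_1a_2\cdots a_\ell\rangle=\sum_{k\ge0}f_k\!\left(-\ell-\tfrac n2\right)\Big(\tfrac12x_bx^b\Big)^k\sum_{M}\ \prod_{\{i,j\}\in M}\eta^{a_ia_j}\prod_{m\in\{1,\dots,\ell\}\setminus\bigcup M}x^{a_m},$$ where for each $k$ the inner sum runs over all sets $M$ of $k$ pairwise disjoint 2-element subsets of $\{1,\dots,\ell\}$ (i.e. the inner sum is the sum of all distinct degree $\ell-2k$ ordered $\eta x$-monomials $\eta^{b_1b_2}\cdots\eta^{b_{2k-1}b_{2k}}x^{b_{2k+1}}\cdots x^{b_\ell}$ with $b$ a permutation of $a$, positions of $a$ being regarded as distinct).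
   Context: $(\eta_{ab})$ is a non-degenerate symmetric $n\times n$ matrix (entries complex, or formal central variables) with inverse $(\eta^{ab})$. Repeated upper/lower indices are summed over $\{1,\dots,n\}$; $x_a=\eta_{ab}x^b$, $\partial_a=\partial/\partial x^a$, $\partial^a=\eta^{ab}\partial_b$. Operators on polynomials: $E=\frac i2\partial_a\partial^a$, $F=\frac i2x_ax^a$ (multiplication), $H=-\frac12(x^a\partial_a+\partial_ax^a)$, which acts on homogeneous polynomials of degree $d$ by the scalar $-d-\frac n2$; $(\operatorname{ad}E)(D)=ED-DE$ for a differential operator $D$. $f_0=1$ and $f_k(t)=\big((t+2)(t+3)\cdots(t+1+k)\big)^{-1}$ for $k\ge1$. (In the paper, $|a_1\cdots a_\ell\rangle=P(x^{a_1}\cdots x^{a_\ell}+I)\cdot1$ with $P$ the extremal projector of $\mathfrak{sl}_2$; the definition above is this expression written out, with $H$ evaluated on the resulting degree-$\ell$ polynomial.) *)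

(* Defs.v *)
From HB Require Import structures.
From mathcomp Require Import all_boot all_order all_algebra.
From mathcomp Require Import mpoly.
Set Implicit Arguments. Unset Strict Implicit. Unset Printing Implicit Defensive.
Import Order.TTheory GRing.Theory Num.Theory.
Local Open Scope ring_scope.

Section Defs.
Variables (R : numClosedFieldType) (n : nat).

Definition polyOp := {mpoly R[n]} -> {mpoly R[n]}.

(* eta^{ab} = inverse matrix entries *)
Definition etaUp (eta : 'M[R]_n) (a b : 'I_n) : R := invmx eta a b.

Definition Eop (eta : 'M[R]_n) : polyOp := fun p =>
  ('i / 2%:R) *: \sum_(a < n) \sum_(b < n) etaUp eta a b *: mderiv a (mderiv b p).

(* x_b x^b = eta_{bc} x^c x^b *)
Definition xsq (eta : 'M[R]_n) : {mpoly R[n]} :=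
  \sum_(b < n) \sum_(c < n) eta b c *: ('X_b * 'X_c).

Definition Fpoly (eta : 'M[R]_n) : {mpoly R[n]} := ('i / 2%:R) *: xsq eta.

Definition adop (E D : polyOp) : polyOp := fun p => E (D p) - D (E p).

Definition mulop (q : {mpoly R[n]}) : polyOp := fun p => q * p.

(* f_k(t) = ((t+2)(t+3)...(t+1+k))^{-1}; empty product for k = 0 gives f_0 = 1 *)
Definition fk (k : nat) (t : R) : R := (\prod_(2 <= j < k.+2) (t + j%:R))^-1.

Definition xmon (l : nat) (a : 'I_l -> 'I_n) : {mpoly R[n]} :=
  \prod_(i < l) 'X_(a i).

Definition tpar (l : nat) : R := - l%:R - n%:R / 2%:R.

(* |a_1 ... a_l> ; the sum over k >= 0 is truncated at k <= l,
   beyond which (ad E)^k(x^a)(1) = E^k(x^a) = 0 (degree reasons). *)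
Definition ket (eta : 'M[R]_n) (l : nat) (a : 'I_l -> 'I_n) : {mpoly R[n]} :=
  \sum_(k < l.+1)
    ((-1) ^+ k / (k`!)%:R * fk k (tpar l)) *:
      (Fpoly eta ^+ k * iter k (adop (Eop eta)) (mulop (xmon a)) 1).

Definition is_kmatching (l k : nat) (M : {set {set 'I_l}}) : bool :=
  [&& #|M| == k, [forall S in M, #|S| == 2] & trivIset M].

Definition matching_term (eta : 'M[R]_n) (l : nat) (a : 'I_l -> 'I_n)
    (M : {set {set 'I_l}}) : {mpoly R[n]} :=
  (\prod_(S in M) \prod_(i in S) \prod_(j in S | (i < j)%N) etaUp eta (a i) (a j))
    *: \prod_(m in ~: cover M) 'X_(a m).

End Defs.

(* Main.v *)
Require Import Defs.
From HB Require Import structures.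
From mathcomp Require Import all_boot all_order all_algebra.
From mathcomp Require Import mpoly.
From mathcomp Require Import ring zify.
Import Order.TTheory GRing.Theory Num.Theory.
Local Open Scope ring_scope.

Module Aux.
Set Implicit Arguments. Unset Strict Implicit. Unset Printing Implicit Defensive.

Section Part1.
Variables (R : numClosedFieldType) (n : nat).

Lemma mderivX1 (c j : 'I_n) : mderiv c ('X_j : {mpoly R[n]}) = (j == c)%:R.
Proof.
rewrite /mpolyX mderivX mnm1E; case: eqP => [->|_].
  have -> : (U_(c) - U_(c) = 0)%MM by apply/mnmP => i; rewrite mnmBE subnn mnm0E.
  by rewrite mpolyX0 scale1r.
by rewrite scale0r.
Qed.

Variables (l : nat) (a : 'I_l -> 'I_n).
Definition PP (A : {set 'I_l}) : {mpoly R[n]} := \prod_(m in A) 'X_(a m).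

Lemma derPP (c : 'I_n) (A : {set 'I_l}) :
  mderiv c (PP A) = \sum_(m in A) (a m == c)%:R *: PP (A :\ m).
Proof.
move: {2}#|A| (erefl #|A|) => k; elim: k A => [|k IH] A hA.
  move/eqP: hA; rewrite cards_eq0 => /eqP ->.
  by rewrite /PP !big_set0 -mpolyC1 mderivC.
have [x xA] : exists x, x \in A.
  by apply/set0Pn; rewrite -cards_eq0 hA.
rewrite /PP (big_setD1 x xA) /= mderivM mderivX1 -/(PP _).
rewrite (big_setD1 x xA) /= IH; last by move: hA; rewrite (cardsD1 x A) xA => -[].
rewrite mulr_natl -scaler_nat; congr (_ + _).
rewrite mulr_sumr; apply: eq_bigr => m /setD1P [mx mA].
rewrite -scalerAr; congr (_ *: _).
have xAm : x \in A :\ m by rewrite !inE eq_sym mx xA.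
rewrite /PP [in RHS](big_setD1 x xAm) /=; congr (_ * _).
by apply: eq_bigl => y; rewrite !inE andbCA.
Qed.
End Part1.


Section Part2.
Variables (R : numClosedFieldType) (n : nat) (eta : 'M[R]_n).
Definition Lap (p : {mpoly R[n]}) : {mpoly R[n]} :=
  \sum_(al < n) \sum_(be < n) etaUp eta al be *: mderiv al (mderiv be p).

Lemma LapD p q : Lap (p + q) = Lap p + Lap q.
Proof.
rewrite /Lap -big_split; apply: eq_bigr => al _; rewrite -big_split.
by apply: eq_bigr => be _; rewrite !mderivD scalerDr.
Qed.

Lemma LapZ c p : Lap (c *: p) = c *: Lap p.
Proof.
rewrite /Lap scaler_sumr; apply: eq_bigr => al _; rewrite scaler_sumr.
by apply: eq_bigr => be _; rewrite !mderivZ !scalerA mulrC.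
Qed.

Lemma Lap0 : Lap 0 = 0.
Proof. by rewrite /Lap big1 // => al _; rewrite big1 // => be _; rewrite !mderiv0 scaler0. Qed.

Lemma Lap_sum (I : finType) (P : pred I) (F : I -> {mpoly R[n]}) :
  Lap (\sum_(i | P i) F i) = \sum_(i | P i) Lap (F i).
Proof.
exact: (big_morph Lap LapD Lap0).
Qed.

Lemma iterLapZ k c p : iter k Lap (c *: p) = c *: iter k Lap p.
Proof. by elim: k => //= k ->; rewrite LapZ. Qed.

Lemma iterLap_sum k (I : finType) (P : pred I) (F : I -> {mpoly R[n]}) :
  iter k Lap (\sum_(i | P i) F i) = \sum_(i | P i) iter k Lap (F i).
Proof. by elim: k => //= k ->; rewrite Lap_sum. Qed.

Lemma sum_delta (V : lmodType R) (j : 'I_n) (F : 'I_n -> V) :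
  \sum_(b < n) (b == j)%:R *: F b = F j.
Proof.
rewrite (bigD1 j) //= eqxx scale1r big1 ?addr0 // => b /negbTE.
by move=> ->; rewrite scale0r.
Qed.

Variables (l : nat) (a : 'I_l -> 'I_n).
Local Notation PA := (@PP R n l a).

Lemma dd_PP (al be : 'I_n) (A : {set 'I_l}) :
  mderiv al (mderiv be (PA A)) = \sum_(m in A) \sum_(m' in A :\ m)
     (be == a m)%:R *: ((al == a m')%:R *: PA (A :\ m :\ m')).
Proof.
rewrite derPP (big_morph (mderiv al) (@mderivD _ _ al) (@mderiv0 _ _ al)); apply: eq_bigr => m _.
rewrite mderivZ derPP scaler_sumr.
by apply: eq_bigr => m' _; rewrite (eq_sym be) (eq_sym al).
Qed.

Lemma LapPP (A : {set 'I_l}) :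
  Lap (PA A) = \sum_(m in A) \sum_(m' in A :\ m)
      etaUp eta (a m') (a m) *: PA (A :\ m :\ m').
Proof.
rewrite /Lap.
under eq_bigr => al _ do under eq_bigr => be _ do
  rewrite dd_PP scaler_sumr.
under eq_bigr => al _ do rewrite exchange_big /=.
rewrite exchange_big /=; apply: eq_bigr => m mA.
under eq_bigr => be _ do under eq_bigr => al _ do rewrite scaler_sumr.
under eq_bigr => be _ do rewrite exchange_big /=.
rewrite exchange_big /=; apply: eq_bigr => m' _.
under eq_bigr => al _ do under eq_bigr => be _ do
  rewrite !scalerA mulrC -!scalerA.
under eq_bigr => al _ do rewrite sum_delta.
by rewrite sum_delta.
Qed.
End Part2.


Section Comb.
Variable l : nat.
Implicit Types (A B S : {set 'I_l}) (M : {set {set 'I_l}}).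

Definition Qm k A M := is_kmatching k M && (cover M \subset A).

Lemma coverU1 S M : cover (S |: M) = S :|: cover M.
Proof. by rewrite /cover bigcup_setU big_set1. Qed.

Lemma kmP k M : reflect [/\ #|M| = k, forall B, B \in M -> #|B| = 2 & trivIset M]
  (is_kmatching k M).
Proof.
apply: (iffP and3P) => [[/eqP c /forall_inP h t]|[c h t]].
  by split => // B /h /eqP.
by split => //; [apply/eqP | apply/forall_inP => B /h ->].
Qed.

Lemma in_cover B M x : B \in M -> x \in B -> x \in cover M.
Proof. by move=> BM xB; apply/bigcupP; exists B. Qed.

Lemma card2_split B m : #|B| = 2 -> m \in B -> exists p, p != m /\ B = [set m; p].
Proof.
move=> cB mB; have : #|B :\ m| == 1%N.
  by move: (cardsD1 m B); rewrite mB cB => -[] /esym; rewrite add0n => ->.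
case/cards1P => p hp.
exists p; split.
  have : p \in B :\ m by rewrite hp set11.
  by rewrite !inE => /andP[].
by rewrite -hp setD1K.
Qed.

Lemma step1 k A m m' (V : zmodType) (f : {set {set 'I_l}} -> V) :
  m \in A -> m' \in A :\ m ->
  \sum_(M | Qm k (A :\ m :\ m') M) f ([set m; m'] |: M) =
  \sum_(M | Qm k.+1 A M && ([set m; m'] \in M)) f M.
Proof.
move=> mA; rewrite !inE => /andP[m'm m'A].
set S := [set m; m'].
have mS : m \in S by rewrite !inE eqxx.
have m'S : m' \in S by rewrite !inE eqxx orbT.
have cS : #|S| = 2 by rewrite cards2 eq_sym m'm.
have SA : S \subset A.
  by apply/subsetP => x; rewrite !inE => /orP[] /eqP ->.
rewrite [RHS](reindex_onto (fun M => S |: M) (fun M' => M' :\ S)) /=; last first.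
  by move=> M' /andP[_ SM']; exact: setD1K.
apply: eq_bigl => M; apply/idP/idP.
- case/andP => /kmP [cM hM tM] cov.
  have SnM : S \notin M.
    apply/negP => SM; have := subsetP cov m (in_cover SM mS).
    by rewrite !inE eqxx andbF.
  rewrite setU1K // eqxx setU11 !andbT /Qm coverU1 subUset SA /=.
  rewrite (subset_trans cov) ?andbT; last by apply/subsetP => x; rewrite !inE => /and3P[].
  have [tr _] : trivIset (S |: M) /\ S \notin M.
    apply: trivIsetU1 => //.
      move=> B BM; rewrite -setI_eq0; apply/eqP/setP => x; rewrite [in RHS]inE.
      apply/negbTE/negP; rewrite inE => /andP[xS xB].
      have := subsetP cov x (in_cover BM xB).
      by move: xS; rewrite !inE => /orP[] /eqP ->; rewrite eqxx ?andbF.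
    by apply/negP => /hM; rewrite cards0.
  apply/kmP; split => //.
    by rewrite cardsU1 SnM cM.
  by move=> B /setU1P [->|/hM].
- case/andP => /andP [/andP [/kmP [cM hM tM] cov] _] /eqP e.
  have SnM : S \notin M by rewrite -e setD11.
  apply/andP; split.
    apply/kmP; split.
    - by move: cM; rewrite cardsU1 SnM => -[].
    - by move=> B BM; apply: hM; rewrite setU1r.
    - by apply: trivIsetS tM; apply: subsetUr.
  apply/subsetP => x /bigcupP [B BM xB].
  have BSM : B \in S |: M by rewrite setU1r.
  have xA : x \in A by apply: (subsetP cov); apply: in_cover BSM xB.
  have dSB : [disjoint S & B].
    move/trivIsetP: tM => tM'; apply: (tM' S B (setU11 S M) BSM).
    by apply: contraNneq SnM => ->.
  rewrite !inE xA andbT; apply/andP; split.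
    by apply: contraTneq xB => ->; rewrite (disjointFr dSB).
  by apply: contraTneq xB => ->; rewrite (disjointFr dSB).
Qed.

Lemma partner_count A M m : trivIset M -> (forall B, B \in M -> #|B| = 2) ->
  cover M \subset A -> m \in A ->
  (\sum_(m' in A :\ m) ([set m; m'] \in M : nat))%N = (m \in cover M : nat).
Proof.
move=> tM hM cov mA.
have [mc|mnc] := boolP (m \in cover M); last first.
  rewrite big1 // => m' _; case: (boolP ([set m; m'] \in M)) => // SM.
  by case/negP: mnc; apply: (in_cover SM); rewrite !inE eqxx.
have BM := pblock_mem mc; have mB : m \in pblock M m by rewrite mem_pblock.
have [p [pm eB]] := card2_split (hM _ BM) mB.
have pA : p \in A :\ m.
  rewrite !inE pm /=; apply: (subsetP cov); apply: (in_cover BM).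
  by rewrite eB !inE eqxx orbT.
rewrite (bigD1 p pA) /= -eB BM big1 ?addn0 //.
move=> m' /andP[m'A m'p].
case: (boolP ([set m; m'] \in M)) => // SM.
have := def_pblock tM SM (_ : m \in [set m; m']); rewrite !inE eqxx => /(_ isT).
rewrite eB => e; have : m' \in [set m; p] by rewrite e !inE eqxx orbT.
move/setD1P: m'A => [m'm _].
by rewrite !inE (negbTE m'm) (negbTE m'p).
Qed.

Lemma sum_in_card A (C : {set 'I_l}) : C \subset A -> (\sum_(m in A) (m \in C : nat))%N = #|C|.
Proof.
move=> CA; rewrite -sum1_card big_mkcond [in RHS]big_mkcond /=.
apply: eq_bigr => m _; case: (boolP (m \in C)) => mC //.
  by rewrite (subsetP CA m mC).
by case: (m \in A).
Qed.

Lemma step3 k A M : Qm k.+1 A M ->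
  (\sum_(m in A) \sum_(m' in A :\ m) ([set m; m'] \in M : nat))%N = (2 * k.+1)%N.
Proof.
case/andP => /kmP [cM hM tM] cov.
rewrite (eq_bigr (fun m => (m \in cover M : nat))); last first.
  by move=> m mA; apply: partner_count.
rewrite sum_in_card // -(eqP tM) (eq_bigr (fun _ => 2%N)); last by move=> B /hM.
by rewrite sum_nat_const cM mulnC.
Qed.

Lemma comb k A (V : zmodType) (f : {set {set 'I_l}} -> V) :
  \sum_(m in A) \sum_(m' in A :\ m) \sum_(M | Qm k (A :\ m :\ m') M) f ([set m; m'] |: M)
  = (\sum_(M | Qm k.+1 A M) f M) *+ (2 * k.+1)%N.
Proof.
rewrite -sumrMnl.
under eq_bigr => m mA do under eq_bigr => m' m'A do
  rewrite (step1 _ _ mA m'A) big_mkcondr /=.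
under eq_bigr => m mA do rewrite exchange_big /=.
rewrite exchange_big /=; apply: eq_bigr => M QM.
rewrite -(step3 QM) -sumrMnr; apply: eq_bigr => m _.
rewrite -sumrMnr; apply: eq_bigr => m' _.
by rewrite mulrb.
Qed.
End Comb.


Section Part4.
Variables (R : numClosedFieldType) (n : nat) (eta : 'M[R]_n).
Hypothesis Hs : forall i j, etaUp eta i j = etaUp eta j i.
Variables (l : nat) (a : 'I_l -> 'I_n).
Local Notation PA := (@PP R n l a).
Local Notation Lap := (Lap eta).

Definition ww (S : {set 'I_l}) : R :=
  \prod_(i in S) \prod_(j in S | (i < j)%N) etaUp eta (a i) (a j).
Definition WW (M : {set {set 'I_l}}) : R := \prod_(S in M) ww S.
Definition hA A M := WW M *: PA (A :\: cover M).
Definition GG k A := \sum_(M | Qm k A M) hA A M.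

Lemma ww2 m m' : m != m' -> ww [set m; m'] = etaUp eta (a m') (a m).
Proof.
wlog lt : m m' / (m < m')%N.
  move=> H ne; case: (ltngtP m m') => [/H -> //|gt|/val_inj e]; last by rewrite e eqxx in ne.
  by rewrite setUC H 1?eq_sym // Hs.
move=> ne; rewrite /ww big_setU1 /=; last by rewrite !inE.
rewrite big_set1 !big_mkcondr /= !big_setU1 /= ?inE // !big_set1.
by rewrite ltnn lt ltnNge ltnW //= ltnn !mul1r mulr1 Hs.
Qed.


Lemma h_step k (A : {set 'I_l}) (m m' : 'I_l) (M : {set {set 'I_l}}) : m \in A -> m' \in A :\ m -> Qm k (A :\ m :\ m') M ->
  etaUp eta (a m') (a m) *: hA (A :\ m :\ m') M = hA A ([set m; m'] |: M).
Proof.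
move=> mA m'A /andP[_ cov].
have mm' : m != m' by move: m'A; rewrite !inE eq_sym => /andP[].
have SnM : [set m; m'] \notin M.
  have mS : m \in [set m; m'] by rewrite !inE eqxx.
  apply/negP => SM; have := subsetP cov m (in_cover SM mS).
  by rewrite !inE eqxx /= andbF.
rewrite /hA /WW big_setU1 //= ww2 // scalerA coverU1; congr (_ *: PA _).
by rewrite !setDDl.
Qed.

Lemma G0 (A : {set 'I_l}) : GG 0 A = PA A.
Proof.
rewrite /GG (big_pred1 set0).
  by rewrite /hA /WW big_set0 scale1r /cover big_set0 setD0.
move=> M /=; apply/idP/eqP => [/andP[/kmP[c _ _] _]|->].
  exact: cards0_eq.
rewrite /Qm /cover big_set0 sub0set andbT; apply/kmP; split.
- exact: cards0.
- by move=> B; rewrite inE.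
- by apply/trivIsetP => B C; rewrite inE.
Qed.

Lemma main_rec k (A : {set 'I_l}) : iter k Lap (PA A) = (2 ^ k * k`!)%:R *: GG k A.
Proof.
elim: k A => [|k IH] A; first by rewrite /= G0 scale1r.
rewrite iterSr LapPP iterLap_sum.
transitivity ((2 ^ k * k`!)%:R *: \sum_(m in A) \sum_(m' in A :\ m)
   \sum_(M | Qm k (A :\ m :\ m') M) hA A ([set m; m'] |: M)).
  rewrite scaler_sumr; apply: eq_bigr => m mA.
  rewrite iterLap_sum scaler_sumr; apply: eq_bigr => m' m'A.
  rewrite iterLapZ IH scalerA mulrC -scalerA; congr (_ *: _).
  by rewrite /GG scaler_sumr; apply: eq_bigr => M QM; exact: (h_step mA m'A QM).
transitivity ((2 ^ k * k`!)%:R *: (GG k.+1 A *+ (2 * k.+1)%N)).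
  by congr (_ *: _); rewrite (comb k A (hA A)).
rewrite -[GG k.+1 A *+ _]scaler_nat scalerA -natrM; congr ((_ %:R) *: _).
by rewrite expnS factS; lia.
Qed.

End Part4.


Lemma iter_ad0 (R : numClosedFieldType) (n : nat) (E D : polyOp R n) :
  E 0 = 0 -> D 0 = 0 -> forall k, iter k (adop E) D 0 = 0.
Proof.
move=> E0 D0; elim=> //= k IH; rewrite /adop IH E0 IH subr0 //.
Qed.

Lemma iter_ad1 (R : numClosedFieldType) (n : nat) (E D : polyOp R n) :
  E 0 = 0 -> E 1 = 0 -> D 0 = 0 -> forall k, iter k (adop E) D 1 = iter k E (D 1).
Proof.
move=> E0 E1 D0; elim=> //= k IH; rewrite {1}/adop IH E1 iter_ad0 // subr0 //.
Qed.

Lemma Eop_Lap (R : numClosedFieldType) (n : nat) (eta : 'M[R]_n) p :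
  Eop eta p = ('i / 2%:R) *: Lap eta p.
Proof. by []. Qed.

Lemma iterE (R : numClosedFieldType) (n : nat) (eta : 'M[R]_n) k p :
  iter k (Eop eta) p = ('i / 2%:R) ^+ k *: iter k (Lap eta) p.
Proof.
elim: k => [|k IH] /=; first by rewrite expr0 scale1r.
by rewrite IH Eop_Lap LapZ scalerA -exprS.
Qed.

Lemma Lap1 (R : numClosedFieldType) (n : nat) (eta : 'M[R]_n) : Lap eta 1 = 0.
Proof.
rewrite /Lap big1 // => al _; rewrite big1 // => be _.
by rewrite -mpolyC1 mderivC mderiv0 scaler0.
Qed.

Lemma Lap0' (R : numClosedFieldType) (n : nat) (eta : 'M[R]_n) : Lap eta 0 = 0.
Proof. exact: Lap0. Qed.

End Aux.
Import Aux.
Unset Implicit Arguments. Set Strict Implicit.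

Theorem mainTheorem7 (R : numClosedFieldType) (n : nat) (eta : 'M[R]_n)
    (Hn : (3 <= n)%N) (Hsym : eta^T = eta) (Hinv : eta \in unitmx)
    (l : nat) (a : 'I_l -> 'I_n) :
  ket eta a =
  \sum_(k < l.+1)
    fk k (@tpar R n l) *:
      ((2%:R^-1 *: xsq eta) ^+ k *
       \sum_(M : {set {set 'I_l}} | is_kmatching k M) matching_term eta a M).
Proof.
have Hs : forall i j, etaUp eta i j = etaUp eta j i.
  by move=> i j; rewrite /etaUp -{1}Hsym -trmx_inv mxE.
have E0 : Eop eta 0 = 0 by rewrite Eop_Lap Lap0 scaler0.
have E1 : Eop eta 1 = 0 by rewrite Eop_Lap Lap1 scaler0.
have D0 : mulop (@xmon R n l a) 0 = 0 by rewrite /mulop mulr0.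
have xP : @xmon R n l a = @PP R n l a [set: 'I_l].
  by rewrite /xmon /PP; apply: eq_bigl => i; rewrite in_setT.
rewrite /ket; apply: eq_bigr => k _.
rewrite iter_ad1 // {1}/mulop mulr1 iterE xP (main_rec Hs).
have -> : GG eta a k [set: 'I_l] =
    \sum_(M : {set {set 'I_l}} | is_kmatching k M) matching_term eta a M.
  rewrite /GG; apply: eq_big => [M|M _]; first by rewrite /Qm subsetT andbT.
  by rewrite /hA /matching_term /WW /ww setTD.
rewrite /Fpoly !exprZn -!scalerAl -!scalerAr !scalerA; congr (_ *: _).
have hi : 'i * 'i = -1 :> R by rewrite -expr2 sqrCi.
have e : (-1) * ('i / 2%:R) * ('i / 2%:R) * 2%:R = (2%:R)^-1 :> R.
  have -> : (-1) * ('i / 2%:R) * ('i / 2%:R) * 2%:R = - ('i * 'i) / 2%:R :> R.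
    by field.
  by rewrite -expr2 sqrCi opprK mul1r.
have fk0 : (k`!)%:R != 0 :> R by rewrite pnatr_eq0 -lt0n fact_gt0.
rewrite natrM natrX -[in RHS]e !exprMn.
by field.
Qed.
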